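(* For terms $e, e_1, e_2$ of $\mathrm{F}_H$: if $e \longrightarrow e_1$ and $e \longrightarrow e_2$, then $e_1 = e_2$.
   Context: Syntax of the calculus $\mathrm{F}_H$. Fix a set of base types $B$ containing $\mathsf{Bool}$; each base type $B$ has a set $\mathcal{K}_B$ of constants (with $\mathcal{K}_{\mathsf{Bool}}=\{\mathsf{true},\mathsf{false}\}$); $k$ ranges over constants. Fix primitive operations $\mathtt{op}$, each with a denotation $[\![\mathtt{op}]\!]$, a partial function from tuples of constants to constants. Types: $T ::= B \mid \alpha \mid x{:}T_1\to T_2 \mid \forall\alpha.T \mid \{x{:}T \mid e\}$. Values: $v ::= k \mid \lambda x{:}T.e \mid \Lambda\alpha.e \mid \langle T_1\Rightarrow T_2\rangle^{\ell}$ ($\ell$ ranges over blame labels). Terms: $e ::= v \mid x \mid \mathtt{op}(e_1,\dots,e_n) \mid e_1\,e_2 \mid e\,T \mid \langle\!\langle \{x{:}T_1\mid e_1\}, e_2\rangle\!\rangle^{\ell} \mid \langle \{x{:}T_1\mid e_1\}, e_2, v\rangle^{\ell} \mid \Uparrow\ell$. Variables are not values. Substitution is capture-avoiding; $\mathsf{let}\ y{:}T = e_1\ \mathsf{in}\ e_2$ abbreviates $(\lambda y{:}T.e_2)\,e_1$. Reduction $\rightsquigarrow$: $\mathtt{op}(k_1,\dots,k_n)\rightsquigarrow[\![\mathtt{op}]\!](k_1,\dots,k_n)$; $(\lambda x{:}T.e)\,v\rightsquigarrow e[v/x]$; $(\Lambda\alpha.e)\,T\rightsquigarrow e[T/\alpha]$;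 $\langle B\Rightarrow B\rangle^\ell v\rightsquigarrow v$; $\langle x{:}T_{11}\to T_{12}\Rightarrow x{:}T_{21}\to T_{22}\rangle^\ell v\rightsquigarrow \lambda x{:}T_{21}.\,\mathsf{let}\ y{:}T_{11}=\langle T_{21}\Rightarrow T_{11}\rangle^\ell x\ \mathsf{in}\ \langle T_{12}[y/x]\Rightarrow T_{22}\rangle^\ell (v\,y)$ with $y$ fresh; $\langle\forall\alpha.T_1\Rightarrow\forall\alpha.T_2\rangle^\ell v\rightsquigarrow\Lambda\alpha.\langle T_1\Rightarrow T_2\rangle^\ell(v\,\alpha)$; $\langle\{x{:}T_1\mid e_1\}\Rightarrow T_2\rangle^\ell v\rightsquigarrow\langle T_1\Rightarrow T_2\rangle^\ell v$; $\langle T_1\Rightarrow\{x{:}T_2\mid e_2\}\rangle^\ell v\rightsquigarrow\langle\!\langle\{x{:}T_2\mid e_2\},\langle T_1\Rightarrow T_2\rangle^\ell v\rangle\!\rangle^\ell$ provided $T_1$ is not a refinement type; $\langle\!\langle\{x{:}T\mid e\},v\rangle\!\rangle^\ell\rightsquigarrow\langle\{x{:}T\mid e\},e[v/x],v\rangle^\ell$; $\langle\{x{:}T\mid e\},\mathsf{true},v\rangle^\ell\rightsquigarrow v$; $\langle\{x{:}T\mid e\},\mathsf{false},v\rangle^\ell\rightsquigarrow\Uparrow\ell$. Evaluation contexts: $E ::= [\,] \mid \mathtt{op}(v_1,\dots,v_n,E,e_1,\dots,e_m) \mid E\,e \mid v\,E \mid E\,T \mid \langle\!\langle\{x{:}T\mid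 e\},E\rangle\!\rangle^\ell \mid \langle\{x{:}T\mid e\},E,v\rangle^\ell$. Evaluation $\longrightarrow$: $E[e_1]\longrightarrow E[e_2]$ whenever $e_1\rightsquigarrow e_2$; $E[\Uparrow\ell]\longrightarrow\Uparrow\ell$ whenever $E\neq[\,]$. *)

(* Defs.v *)
(* Syntax and operational semantics of the calculus F_H,
   using de Bruijn indices (two independent index spaces: term variables
   and type variables), so that syntactic equality is alpha-equivalence. *)
From Stdlib Require Import List Arith.
Import ListNotations.
Set Implicit Arguments.

Record signature := {
  base : Type;
  tyBool : base;
  const : Type;
  const_ty : const -> base;
  ctrue : const;
  cfalse : const;
  ctrue_ty : const_ty ctrue = tyBool;
  cfalse_ty : const_ty cfalse = tyBool;
  ctrue_cfalse : ctrue <> cfalse;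
  Bool_consts : forall k, const_ty k = tyBool -> k = ctrue \/ k = cfalse;
  prim : Type;
  denote : prim -> list const -> option const;
  label : Type
}.

Section Syntax.
Variable Sg : signature.

(* Types  T ::= B | alpha | x:T1 -> T2 | forall alpha. T | {x:T | e}
   Terms  e ::= k | x | lambda x:T. e | Lambda alpha. e | <T1 => T2>^l
              | op(e1..en) | e1 e2 | e T | <<{x:T|e1}, e2>>^l
              | <{x:T|e1}, e2, v>^l | blame l
   Binders: TArr binds a term var in T2; TAll binds a type var;
   TRef binds a term var in e; tabs binds a term var in its body;
   ttabs binds a type var; tcheck/tactive bind a term var in the
   refinement predicate (second argument) only. *)
Inductive ty : Type :=
| TBase (b : base Sg)
| TVar (n : nat)
| TArr (T1 T2 : ty)
| TAll (T : ty)
| TRef (T : ty) (e : tm)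
with tm : Type :=
| tconst (k : const Sg)
| tvar (n : nat)
| tabs (T : ty) (e : tm)
| ttabs (e : tm)
| tcast (T1 T2 : ty) (l : label Sg)
| top (o : prim Sg) (es : list tm)
| tapp (e1 e2 : tm)
| ttapp (e : tm) (T : ty)
| tcheck (T : ty) (e1 : tm) (e2 : tm) (l : label Sg)
| tactive (T : ty) (e1 : tm) (e2 : tm) (v : tm) (l : label Sg)
| tblame (l : label Sg).

Definition value (t : tm) : Prop :=
  match t with
  | tconst _ | tabs _ _ | ttabs _ | tcast _ _ _ => True
  | _ => False
  end.

(* Conformance to the grammar: the third component of an active check is a value. *)
Fixpoint wf_ty (T : ty) : Prop :=
  match T with
  | TBase _ | TVar _ => True
  | TArr T1 T2 => wf_ty T1 /\ wf_ty T2
  | TAll T => wf_ty T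
  | TRef T e => wf_ty T /\ wf_tm e
  end
with wf_tm (t : tm) : Prop :=
  match t with
  | tconst _ | tvar _ | tblame _ => True
  | tabs T e => wf_ty T /\ wf_tm e
  | ttabs e => wf_tm e
  | tcast T1 T2 _ => wf_ty T1 /\ wf_ty T2
  | top _ es => (fix go (es : list tm) : Prop :=
                   match es with [] => True | e :: es' => wf_tm e /\ go es' end) es
  | tapp e1 e2 => wf_tm e1 /\ wf_tm e2
  | ttapp e T => wf_tm e /\ wf_ty T
  | tcheck T e1 e2 _ => wf_ty T /\ wf_tm e1 /\ wf_tm e2
  | tactive T e1 e2 v _ => wf_ty T /\ wf_tm e1 /\ wf_tm e2 /\ wf_tm v /\ value v
  end.

Fixpoint shty (c d : nat) (T : ty) : ty :=
  match T with
  | TBase b => TBase b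
  | TVar n => TVar n
  | TArr T1 T2 => TArr (shty c d T1) (shty (S c) d T2)
  | TAll T => TAll (shty c d T)
  | TRef T e => TRef (shty c d T) (shtm (S c) d e)
  end
with shtm (c d : nat) (t : tm) : tm :=
  match t with
  | tconst k => tconst k
  | tvar n => if n <? c then tvar n else tvar (n + d)
  | tabs T e => tabs (shty c d T) (shtm (S c) d e)
  | ttabs e => ttabs (shtm c d e)
  | tcast T1 T2 l => tcast (shty c d T1) (shty c d T2) l
  | top o es => top o (map (shtm c d) es)
  | tapp e1 e2 => tapp (shtm c d e1) (shtm c d e2)
  | ttapp e T => ttapp (shtm c d e) (shty c d T)
  | tcheck T e1 e2 l => tcheck (shty c d T) (shtm (S c) d e1) (shtm c d e2) l
  | tactive T e1 e2 v l =>
      tactive (shty c d T) (shtm (S c) d e1) (shtm c d e2) (shtm c d v) l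
  | tblame l => tblame l
  end.

Fixpoint tshty (c d : nat) (T : ty) : ty :=
  match T with
  | TBase b => TBase b
  | TVar n => if n <? c then TVar n else TVar (n + d)
  | TArr T1 T2 => TArr (tshty c d T1) (tshty c d T2)
  | TAll T => TAll (tshty (S c) d T)
  | TRef T e => TRef (tshty c d T) (tshtm c d e)
  end
with tshtm (c d : nat) (t : tm) : tm :=
  match t with
  | tconst k => tconst k
  | tvar n => tvar n
  | tabs T e => tabs (tshty c d T) (tshtm c d e)
  | ttabs e => ttabs (tshtm (S c) d e)
  | tcast T1 T2 l => tcast (tshty c d T1) (tshty c d T2) l
  | top o es => top o (map (tshtm c d) es)
  | tapp e1 e2 => tapp (tshtm c d e1) (tshtm c d e2)
  | ttapp e T => ttapp (tshtm c d e) (tshty c d T)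
  | tcheck T e1 e2 l => tcheck (tshty c d T) (tshtm c d e1) (tshtm c d e2) l
  | tactive T e1 e2 v l =>
      tactive (tshty c d T) (tshtm c d e1) (tshtm c d e2) (tshtm c d v) l
  | tblame l => tblame l
  end.

(* Capture-avoiding substitution of the term s for term variable j
   (variables above j are decremented, as j's binder is removed). *)
Fixpoint substty (j : nat) (s : tm) (T : ty) : ty :=
  match T with
  | TBase b => TBase b
  | TVar n => TVar n
  | TArr T1 T2 => TArr (substty j s T1) (substty (S j) (shtm 0 1 s) T2)
  | TAll T => TAll (substty j (tshtm 0 1 s) T)
  | TRef T e => TRef (substty j s T) (substtm (S j) (shtm 0 1 s) e)
  end
with substtm (j : nat) (s : tm) (t : tm) : tm :=
  match t with
  | tconst k => tconst k
  | tvar n => if n =? j then s else if j <? n then tvar (n - 1) else tvar n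
  | tabs T e => tabs (substty j s T) (substtm (S j) (shtm 0 1 s) e)
  | ttabs e => ttabs (substtm j (tshtm 0 1 s) e)
  | tcast T1 T2 l => tcast (substty j s T1) (substty j s T2) l
  | top o es => top o (map (substtm j s) es)
  | tapp e1 e2 => tapp (substtm j s e1) (substtm j s e2)
  | ttapp e T => ttapp (substtm j s e) (substty j s T)
  | tcheck T e1 e2 l =>
      tcheck (substty j s T) (substtm (S j) (shtm 0 1 s) e1) (substtm j s e2) l
  | tactive T e1 e2 v l =>
      tactive (substty j s T) (substtm (S j) (shtm 0 1 s) e1) (substtm j s e2)
              (substtm j s v) l
  | tblame l => tblame l
  end.

Fixpoint tsubstty (j : nat) (U : ty) (T : ty) : ty :=
  match T with
  | TBase b => TBase b
  | TVar n => if n =? j then U else if j <? n then TVar (n - 1) else TVar n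
  | TArr T1 T2 => TArr (tsubstty j U T1) (tsubstty j (shty 0 1 U) T2)
  | TAll T => TAll (tsubstty (S j) (tshty 0 1 U) T)
  | TRef T e => TRef (tsubstty j U T) (tsubsttm j (shty 0 1 U) e)
  end
with tsubsttm (j : nat) (U : ty) (t : tm) : tm :=
  match t with
  | tconst k => tconst k
  | tvar n => tvar n
  | tabs T e => tabs (tsubstty j U T) (tsubsttm j (shty 0 1 U) e)
  | ttabs e => ttabs (tsubsttm (S j) (tshty 0 1 U) e)
  | tcast T1 T2 l => tcast (tsubstty j U T1) (tsubstty j U T2) l
  | top o es => top o (map (tsubsttm j U) es)
  | tapp e1 e2 => tapp (tsubsttm j U e1) (tsubsttm j U e2)
  | ttapp e T => ttapp (tsubsttm j U e) (tsubstty j U T)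
  | tcheck T e1 e2 l =>
      tcheck (tsubstty j U T) (tsubsttm j (shty 0 1 U) e1) (tsubsttm j U e2) l
  | tactive T e1 e2 v l =>
      tactive (tsubstty j U T) (tsubsttm j (shty 0 1 U) e1) (tsubsttm j U e2)
              (tsubsttm j U v) l
  | tblame l => tblame l
  end.

Definition is_refinement (T : ty) : Prop :=
  match T with TRef _ _ => True | _ => False end.

(* The function-cast result
   lambda x:T21. let y:T11 = <T21 => T11>^l x in <T12[y/x] => T22>^l (v y),
   with let y:T = e1 in e2 := (lambda y:T. e2) e1. In de Bruijn form,
   inside the let body y = 0 and x = 1. *)
Definition fun_cast_result (T11 T12 T21 T22 : ty) (l : label Sg) (v : tm) : tm :=
  tabs T21
    (tapp
       (tabs (shty 0 1 T11)
          (tapp (tcast (shty 1 1 T12) (shty 0 1 T22) l)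
                (tapp (shtm 0 2 v) (tvar 0))))
       (tapp (tcast (shty 0 1 T21) (shty 0 1 T11) l) (tvar 0))).

Inductive red : tm -> tm -> Prop :=
| red_op : forall o ks k,
    denote Sg o ks = Some k -> red (top o (map tconst ks)) (tconst k)
| red_beta : forall T e v, value v -> red (tapp (tabs T e) v) (substtm 0 v e)
| red_tbeta : forall e T, red (ttapp (ttabs e) T) (tsubsttm 0 T e)
| red_cast_base : forall b l v, value v ->
    red (tapp (tcast (TBase b) (TBase b) l) v) v
| red_cast_fun : forall T11 T12 T21 T22 l v, value v ->
    red (tapp (tcast (TArr T11 T12) (TArr T21 T22) l) v)
        (fun_cast_result T11 T12 T21 T22 l v)
| red_cast_forall : forall T1 T2 l v, value v ->
    red (tapp (tcast (TAll T1) (TAll T2) l) v)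
        (ttabs (tapp (tcast T1 T2 l) (ttapp (tshtm 0 1 v) (TVar 0))))
| red_cast_forget : forall T1 e1 T2 l v, value v ->
    red (tapp (tcast (TRef T1 e1) T2 l) v) (tapp (tcast T1 T2 l) v)
| red_cast_precheck : forall T1 T2 e2 l v, value v -> ~ is_refinement T1 ->
    red (tapp (tcast T1 (TRef T2 e2) l) v)
        (tcheck T2 e2 (tapp (tcast T1 T2 l) v) l)
| red_check : forall T e v l, value v ->
    red (tcheck T e v l) (tactive T e (substtm 0 v e) v l)
| red_ok : forall T e v l, value v ->
    red (tactive T e (tconst (ctrue Sg)) v l) v
| red_fail : forall T e v l, value v ->
    red (tactive T e (tconst (cfalse Sg)) v l) (tblame l).

Inductive ectx : Type :=
| EHole
| EOp (o : prim Sg) (vs : list tm) (E : ectx) (es : list tm)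
| EAppL (E : ectx) (e : tm)
| EAppR (v : tm) (E : ectx)
| ETApp (E : ectx) (T : ty)
| ECheck (T : ty) (e : tm) (E : ectx) (l : label Sg)
| EActive (T : ty) (e : tm) (E : ectx) (v : tm) (l : label Sg).

Fixpoint ectx_ok (E : ectx) : Prop :=
  match E with
  | EHole => True
  | EOp _ vs E _ => Forall value vs /\ ectx_ok E
  | EAppL E _ => ectx_ok E
  | EAppR v E => value v /\ ectx_ok E
  | ETApp E _ => ectx_ok E
  | ECheck _ _ E _ => ectx_ok E
  | EActive _ _ E v _ => value v /\ ectx_ok E
  end.

Fixpoint plug (E : ectx) (t : tm) : tm :=
  match E with
  | EHole => t
  | EOp o vs E es => top o (vs ++ plug E t :: es)
  | EAppL E e => tapp (plug E t) e
  | EAppR v E => tapp v (plug E t)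
  | ETApp E T => ttapp (plug E t) T
  | ECheck T e E l => tcheck T e (plug E t) l
  | EActive T e E v l => tactive T e (plug E t) v l
  end.

Inductive step : tm -> tm -> Prop :=
| step_ctx : forall E e1 e2, ectx_ok E -> red e1 e2 -> step (plug E e1) (plug E e2)
| step_blame : forall E l, ectx_ok E -> E <> EHole ->
    step (plug E (tblame l)) (tblame l).

End Syntax.

(* Main.v *)
Require Import Defs.
From Stdlib Require Import List.
Import ListNotations.

Section P.
Variable S : signature.

Definition atomic (t : tm S) := (exists t', red t t') \/ (exists l, t = tblame S l).

Lemma atomic_not_value t : atomic t -> ~ value t.
Proof.
  intros [[u Hr]|[l ->]]; simpl; auto.
  inversion Hr; subst; simpl; auto.
Qed.

Lemma plug_not_value E t : atomic t -> ~ value (plug E t).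
Proof. intros Ha; destruct E; simpl; auto. apply atomic_not_value; auto. Qed.

Ltac pnv Ha' := match goal with |- context [plug ?E ?t] => apply (@plug_not_value E t Ha') end.

Lemma atomic_not_plug E t t' : atomic t -> atomic t' -> E <> EHole S ->
  t = plug E t' -> False.
Proof.
  intros Ha Ha' HE Heq.
  destruct Ha as [[u Hr]|[l ->]].
  - revert Heq; inversion Hr; subst; intro Heq; destruct E; simpl in Heq; try congruence;
      injection Heq; intros; subst;
      try (match goal with H : value (plug ?E ?t) |- _ => exact (@plug_not_value E t Ha' H) end);
      try (match goal with H : _ = plug ?E ?t |- _ =>
             apply (@plug_not_value E t Ha'); rewrite <- H; exact I end).
    all: match goal with H : map _ ?ks = _ ++ plug ?E ?t' :: _ |- _ =>
      assert (Hin : In (plug E t') (map (tconst S) ks)) by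
        (rewrite H; apply in_or_app; right; left; reflexivity);
      apply in_map_iff in Hin; destruct Hin as [k' [Hk _]];
      apply (@plug_not_value E t' Ha'); rewrite <- Hk; exact I end.
  - destruct E; simpl in *; congruence.
Qed.

Lemma list_decomp : forall (vs vs' es es' : list (tm S)) x x',
  Forall (@value S) vs -> Forall (@value S) vs' -> ~ value x -> ~ value x' ->
  vs ++ x :: es = vs' ++ x' :: es' -> vs = vs' /\ x = x' /\ es = es'.
Proof.
  induction vs; destruct vs'; simpl; intros es es' x x' H1 H2 H3 H4 H5;
    injection H5; intros; subst.
  - auto.
  - inversion H2; subst. contradiction.
  - inversion H1; subst. contradiction.
  - inversion H1; inversion H2; subst.
    destruct (IHvs vs' es es' x x') as [? [? ?]]; auto. subst; auto.
Qed.

Lemma decomp : forall E E' t t', ectx_ok E -> ectx_ok E' -> atomic t -> atomic t' ->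
  plug E t = plug E' t' -> E = E' /\ t = t'.
Proof.
  induction E; intros E' t t' Hok Hok' Ha Ha' Heq.
  - destruct E'.
    + simpl in Heq; auto.
    + exfalso; eapply atomic_not_plug; [exact Ha|exact Ha'| |exact Heq]; discriminate.
    + exfalso; eapply atomic_not_plug; [exact Ha|exact Ha'| |exact Heq]; discriminate.
    + exfalso; eapply atomic_not_plug; [exact Ha|exact Ha'| |exact Heq]; discriminate.
    + exfalso; eapply atomic_not_plug; [exact Ha|exact Ha'| |exact Heq]; discriminate.
    + exfalso; eapply atomic_not_plug; [exact Ha|exact Ha'| |exact Heq]; discriminate.
    + exfalso; eapply atomic_not_plug; [exact Ha|exact Ha'| |exact Heq]; discriminate.
  - destruct E'; [exfalso; eapply atomic_not_plug; [exact Ha'|exact Ha| |symmetry; exact Heq]; discriminate| ..];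
      simpl in *; try discriminate.
    injection Heq; intros Hl Ho; subst.
    destruct Hok as [Hv Hok]; destruct Hok' as [Hv' Hok'].
    destruct (list_decomp _ _ _ _ _ _ Hv Hv' (@plug_not_value E t Ha) (@plug_not_value E' t' Ha') Hl)
      as [? [Hp ?]]; subst.
    destruct (IHE E' t t') as [? ?]; auto. subst; auto.
  - destruct E'; [exfalso; eapply atomic_not_plug; [exact Ha'|exact Ha| |symmetry; exact Heq]; discriminate| ..];
      simpl in *; try discriminate; injection Heq; intros; subst.
    + destruct (IHE E' t t') as [? ?]; auto. subst; auto.
    + exfalso. destruct Hok' as [Hv _]. exact (@plug_not_value E t Ha Hv).
  - destruct E'; [exfalso; eapply atomic_not_plug; [exact Ha'|exact Ha| |symmetry; exact Heq]; discriminate| ..];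
      simpl in *; try discriminate; injection Heq; intros; subst.
    + exfalso. destruct Hok as [Hv _]. exact (@plug_not_value E' t' Ha' Hv).
    + destruct Hok, Hok'. destruct (IHE E' t t') as [? ?]; auto. subst; auto.
  - destruct E'; [exfalso; eapply atomic_not_plug; [exact Ha'|exact Ha| |symmetry; exact Heq]; discriminate| ..];
      simpl in *; try discriminate; injection Heq; intros; subst.
    destruct (IHE E' t t') as [? ?]; auto. subst; auto.
  - destruct E'; [exfalso; eapply atomic_not_plug; [exact Ha'|exact Ha| |symmetry; exact Heq]; discriminate| ..];
      simpl in *; try discriminate; injection Heq; intros; subst.
    destruct (IHE E' t t') as [? ?]; auto. subst; auto.
  - destruct E'; [exfalso; eapply atomic_not_plug; [exact Ha'|exact Ha| |symmetry; exact Heq]; discriminate| ..];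
      simpl in *; try discriminate; injection Heq; intros; subst.
    destruct Hok, Hok'. destruct (IHE E' t t') as [? ?]; auto. subst; auto.
Qed.

Lemma map_tconst_inj : forall ks ks', map (tconst S) ks = map (tconst S) ks' -> ks = ks'.
Proof.
  induction ks; destruct ks'; simpl; intros H; try discriminate; auto.
  injection H; intros; subst. f_equal; auto.
Qed.

Lemma red_det (t a b : tm S) : red t a -> red t b -> a = b.
Proof.
  intros H1 H2; inversion H1; subst; inversion H2; subst; try congruence;
    simpl in *; try contradiction.
  { apply map_tconst_inj in H4; subst. congruence. }
  all: exfalso; apply (ctrue_cfalse S); congruence.
Qed.

End P.

Theorem mainTheorem2 (S : signature) (e e1 e2 : tm S) :
  wf_tm e -> step e e1 -> step e e2 -> e1 = e2.
Proof.
  intros _ H1 H2. destruct H1 as [E a a' Hok Hr|E l Hok HE];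
    inversion H2 as [E' b b' Hok' Hr' Heq|E' l' Hok' HE' Heq]; subst.
  - destruct (@decomp S E E' a b Hok Hok' ltac:(left; eauto) ltac:(left; eauto)
      ltac:(congruence)) as [? ?].
    subst. f_equal. eapply red_det; eauto.
  - destruct (@decomp S E E' a (tblame S l') Hok Hok' ltac:(left; eauto) ltac:(right; eauto)
      ltac:(congruence)) as [? ?].
    subst. inversion Hr.
  - destruct (@decomp S E E' (tblame S l) b Hok Hok' ltac:(right; eauto) ltac:(left; eauto)
      ltac:(congruence)) as [? ?].
    subst. inversion Hr'.
  - destruct (@decomp S E E' (tblame S l) (tblame S l') Hok Hok' ltac:(right; eauto) ltac:(right; eauto)
      ltac:(congruence)) as [? ?].
    congruence.
Qed.
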